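(* Let $F=(A,R)$ be an abstract argumentation framework. If $S$ is an initial set of $F$, then there is a strongly connected component $F'=(A',R')$ of $F$ with $S\subseteq A'$.
   Context: An abstract argumentation framework is a pair $F=(A,R)$ with $A$ a finite set and $R\subseteq A\times A$ ($a\to b$ means $(a,b)\in R$). $S\subseteq A$ is admissible if it is conflict-free and every attacker of an element of $S$ is attacked by some element of $S$. An initial set is a non-empty admissible set with no non-empty admissible proper subset. For $X\subseteq A$, $F|_X=(X,R\cap(X\times X))$. A strongly connected component (SCC) of $F$ is a framework $F|_{A'}$ such that there is a directed path in $F|_{A'}$ between any two arguments of $A'$ and $A'$ is maximal with this property. *)

(* Defs.v *)
From mathcomp Require Import all_boot.
Set Implicit Arguments. Unset Strict Implicit. Unset Printing Implicit Defensive.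

(* An argumentation framework F = (A, R): arguments form a finite type A,
   the attack relation is R : rel A  (R a b  means  a -> b). *)

Section AF.
Variables (A : finType) (R : rel A).

Definition conflict_free (S : {set A}) : Prop :=
  forall a b, a \in S -> b \in S -> ~~ R a b.

Definition admissible (S : {set A}) : Prop :=
  conflict_free S /\
  forall a b, a \in S -> R b a -> exists2 c, c \in S & R c b.

Definition initial (S : {set A}) : Prop :=
  S != set0 /\ admissible S /\
  forall T : {set A}, T \proper S -> T != set0 -> ~ admissible T.

Definition path_in (X : {set A}) (a b : A) : Prop :=
  exists p : seq A,
    [/\ path R a p, last a p = b, a \in X & all (fun x => x \in X) p].

Definition strongly_connected (X : {set A}) : Prop :=
  forall a b, a \in X -> b \in X -> path_in X a b.

Definition scc (X : {set A}) : Prop :=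
  strongly_connected X /\
  forall Y : {set A}, X \subset Y -> strongly_connected Y -> Y = X.

End AF.

(* Main.v *)
Require Import Defs.
From mathcomp Require Import all_boot.

Lemma suffix_connect (A : finType) (R : rel A) x p z :
  path R x p -> z \in p -> connect R z (last x p).
Proof.
move=> Hp Hz; case/splitPr: Hz Hp => p1 p2.
rewrite cat_path last_cat /= => /andP[_ /andP[_ H2]].
by apply/connectP; exists p2.
Qed.

Theorem proposition1 (A : finType) (R : rel A) (S : {set A}) :
  initial R S -> exists2 A' : {set A}, scc R A' & S \subset A'.
Proof.
case=> ne [[cf def] minS].
have reach : forall a x, a \in S -> x \in S -> connect R x a.
  move=> a x aS; move: x; pose S' := [set x in S | connect R x a].
  have sub : S' \subset S by apply/subsetP => x; rewrite inE => /andP[].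
  have : S' == S.
    apply/negPn/negP => neS.
    have pr : S' \proper S by rewrite properEneq neS sub.
    apply: (minS S' pr).
      by apply/set0Pn; exists a; rewrite inE aS connect0.
    split.
      by move=> x y; rewrite !inE => /andP[xS _] /andP[yS _]; apply: cf.
    move=> x b; rewrite inE => /andP[xS xa] bx.
    have [c cS cb] := def x b xS bx.
    exists c => //; rewrite inE cS /=.
    apply: connect_trans (connect1 cb) _.
    exact: connect_trans (connect1 bx) xa.
  by move/eqP => E x xS; move: xS; rewrite -E inE => /andP[].
case/set0Pn: ne => a aS.
pose X := [set x | connect R a x && connect R x a].
have inX : forall x, (x \in X) = connect R a x && connect R x a.
  by move=> x; rewrite inE.
exists X.
  split.
    move=> x y; rewrite !inX => /andP[ax xa] /andP[ay ya].
    have /connectP [p Hp Hl] : connect R x y by apply: connect_trans xa ay.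
    exists p; split => //; first by rewrite inX ax xa.
    apply/allP => z zp; rewrite inX.
    have xz : connect R x z.
      by apply: (path_connect Hp); rewrite inE zp orbT.
    have zy : connect R z y by rewrite Hl; apply: suffix_connect Hp zp.
    by rewrite (connect_trans ax xz) (connect_trans zy ya).
  move=> Y XY scY; apply/eqP; rewrite eqEsubset XY andbT.
  have aY : a \in Y by apply: (subsetP XY); rewrite inX !connect0.
  apply/subsetP => y yY; rewrite inX.
  have [p [Hp Hl _ _]] := scY a y aY yY.
  have [q [Hq Hm _ _]] := scY y a yY aY.
  by apply/andP; split; [apply/connectP; exists p | apply/connectP; exists q].
by apply/subsetP => x xS; rewrite inX !reach.
Qed.
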